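(* Let $\Delta$ be a simplicial complex of subsets of $\{1,\dots,n\}$ and let $f=X_\alpha X_\beta-X_\gamma X_\delta\in Q_\Delta$ be a binomial such that $X_\alpha$ and $X_\gamma$ are both entries of the same margin $\mathscr J\in\Delta$ (i.e. $\{j:\alpha_j\neq\bullet\}=\{j:\gamma_j\ne\bullet\}=\mathscr J$), and let $\mathcal K=\{j:\beta_j\ne\bullet\}$ be the margin of which $X_\beta$ is an entry. Then $L_{\mathscr J\cap\mathcal K}\cdot\tau_\Delta(f)\subseteq I_\Delta$.
   Context: $\mathbb K$ is a field, $a_1,\dots,a_n$ positive integers, $R=\mathbb K[x_{i_1,\dots,i_n}:1\le i_j\le a_j]$, $A=(x_{i_1,\dots,i_n})$ the generic table. For a tuple $\sigma$ with $\sigma_j\in\{1,\dots,a_j\}\cup\{+\}$, $x_\sigma$ is the sum of all $x_{i_1,\dots,i_n}$ with $i_j=\sigma_j$ whenever $\sigma_j\ne+$. For $\mathscr J=\{j_1<\dots<j_m\}\subseteq\{1,\dots,n\}$, the margin $A_{\mathscr J}$ is the $a_{j_1}\times\dots\times a_{j_m}$ table whose $(i_1,\dots,i_m)$ entry is $x_\sigma$ with $\sigma_{j_r}=i_r$ and $\sigma_j=+$ for $j\notin\mathscr J$; $L_{\mathscr J}\subseteq R$ is the ideal generated by the entries of $A_{\mathscr J}$ (so $L_\emptyset=(x_{+,\dots,+})$). For a table $B$ with entries in $R$, $I(B)$ is the ideal generated by all generalized $2\times2$ minors of $B$ (determinants $\det\begin{pmatrix} b_{i} & b_{j_1,\dots,i_l,\dots,j_m}\\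 b_{i_1,\dots,j_l,\dots,i_m} & b_{j}\end{pmatrix}$ interchanging one coordinate $l$), and $I_\Delta=\sum_{\mathscr J\in\Delta}I(A_{\mathscr J})$. A simplicial complex is a nonempty family of subsets of $\{1,\dots,n\}$ closed under subsets. $S_\Delta$ is the polynomial ring over $\mathbb K$ in variables $X_\sigma$ for tuples $\sigma$ with $\sigma_j\in\{1,\dots,a_j\}\cup\{\bullet\}$ and $\{j:\sigma_j\ne\bullet\}\in\Delta$; $X_\sigma$ is said to be an entry of the margin $\{j:\sigma_j\ne\bullet\}$. $\tau_\Delta:S_\Delta\to R$ sends $X_\sigma\mapsto x_{\sigma''}$ ($\bullet$ replaced by $+$). $\eta_\Delta:S_\Delta\to\mathbb K[y_{j,i}:1\le j\le n,\ i\in\{1,\dots,a_j\}\cup\{\bullet\}]$ (the $y_{j,\bullet}$ being independent variables) sends $X_\sigma\mapsto\prod_{j}y_{j,\sigma_j}$, and $Q_\Delta=\ker\eta_\Delta$. *)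

(* Defs.v *)
From HB Require Import structures.
From mathcomp Require Import all_boot all_order all_algebra.
From mathcomp Require Import mpoly.

Import GRing.Theory.
Local Open Scope ring_scope.

(* Coordinates j range over 'I_n (standing for {1,...,n}); the j-th index
   ranges over 'I_(a j) (standing for {1,...,a_j}). *)

Definition cell (n : nat) (a : 'I_n -> nat) : finType := {dffun forall j : 'I_n, 'I_(a j)}.
(* tuples sigma with sigma_j in {1..a_j} u {bullet};  None = bullet (= + ) *)
Definition tup (n : nat) (a : 'I_n -> nat) : finType := {dffun forall j : 'I_n, option 'I_(a j)}.

Definition Rpoly (K : fieldType) n a := {mpoly K[#|cell n a|]}.
Definition xv (K : fieldType) n a (c : cell n a) : Rpoly K n a := 'X_(enum_rank c).

Definition supp n a (s : tup n a) : {set 'I_n} := [set j | s j != None].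

Definition matches n a (s : tup n a) (c : cell n a) : bool :=
  [forall j, if s j is Some i then c j == i else true].

Definition xm (K : fieldType) n a (s : tup n a) : Rpoly K n a :=
  \sum_(c : cell n a | matches n a s c) xv K n a c.

(* the ring S (variables X_sigma for all tuples sigma; S_Delta is the
   subring on the sigma with support in Delta) *)
Definition Spoly (K : fieldType) n a := {mpoly K[#|tup n a|]}.
Definition XS (K : fieldType) n a (s : tup n a) : Spoly K n a := 'X_(enum_rank s).

Definition tau (K : fieldType) n a (p : Spoly K n a) : Rpoly K n a :=
  mmap (fun k : K => k%:MP) (fun i => xm K n a (enum_val i)) p.

Definition ytype n (a : 'I_n -> nat) : finType := {j : 'I_n & option 'I_(a j)}.
Definition Ypoly (K : fieldType) n a := {mpoly K[#|ytype n a|]}.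
Definition yv (K : fieldType) n a (j : 'I_n) (i : option 'I_(a j)) : Ypoly K n a :=
  'X_(enum_rank (Tagged (fun j => option 'I_(a j)) i : ytype n a)).

Definition eta (K : fieldType) n a (p : Spoly K n a) : Ypoly K n a :=
  mmap (fun k : K => k%:MP)
       (fun i => \prod_(j < n) yv K n a j ((enum_val i : tup n a) j)) p.

Definition inQ (K : fieldType) n a (p : Spoly K n a) : Prop := eta K n a p = 0.

Definition genI (T : comRingType) (G : T -> Prop) (p : T) : Prop :=
  exists s : seq (T * T), (forall q, q \in s -> G q.2) /\
                          p = \sum_(q <- s) q.1 * q.2.

Definition Lmarg (K : fieldType) n a (J : {set 'I_n}) : Rpoly K n a -> Prop :=
  genI _ (fun p => exists s : tup n a, supp n a s = J /\ p = xm K n a s).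

Definition swapc n a (s r : tup n a) (l : 'I_n) : tup n a :=
  [ffun j => if j == l then r j else s j].

(* generalized 2x2 minor  det [[b_s, b_{r with l-coord of s}],
                                [b_{s with l-coord of r}, b_r]] *)
Definition minor2 (K : fieldType) n a (s r : tup n a) (l : 'I_n) : Rpoly K n a :=
  xm K n a s * xm K n a r - xm K n a (swapc n a r s l) * xm K n a (swapc n a s r l).

Definition IA (K : fieldType) n a (J : {set 'I_n}) : Rpoly K n a -> Prop :=
  genI _ (fun p => exists (s r : tup n a) (l : 'I_n),
          [/\ supp n a s = J, supp n a r = J, l \in J & p = minor2 K n a s r l]).

(* I_Delta = sum_{J in Delta} I(A_J) (ideal generated by their union) *)
Definition IDelta (K : fieldType) n a (D : {set {set 'I_n}}) : Rpoly K n a -> Prop :=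
  genI _ (fun p => exists J, J \in D /\ IA K n a J p).

Definition simplicial n (D : {set {set 'I_n}}) : Prop :=
  D != set0 /\ (forall J J' : {set 'I_n}, J \in D -> J' \subset J -> J' \in D).

(* Main.v *)
Require Import Defs.
From HB Require Import structures.
From mathcomp Require Import all_boot all_order all_algebra.
From mathcomp Require Import mpoly.
From mathcomp Require Import ring.
Import GRing.Theory.
Local Open Scope ring_scope.

Lemma genI0 (T : comNzRingType) G : genI T G 0.
Proof. by exists [::]; rewrite big_nil. Qed.

Lemma genID (T : comNzRingType) G p q : genI T G p -> genI T G q -> genI T G (p + q).
Proof.
move=> [s [Hs ->]] [t [Ht ->]]; exists (s ++ t); split; last by rewrite big_cat.
by move=> x; rewrite mem_cat => /orP[/Hs|/Ht].
Qed.

Lemma genIM (T : comNzRingType) G r p : genI T G p -> genI T G (r * p).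
Proof.
move=> [s [Hs ->]]; exists (map (fun q => (r * q.1, q.2)) s); split.
  move=> x /mapP[y Hy ->] /=. exact: Hs.
by rewrite big_map mulr_sumr; apply: eq_bigr => i _; rewrite mulrA.
Qed.

Lemma genIMr (T : comNzRingType) G r p : genI T G p -> genI T G (p * r).
Proof. by rewrite mulrC; apply: genIM. Qed.

Lemma genIN (T : comNzRingType) G p : genI T G p -> genI T G (- p).
Proof. by move=> H; rewrite -mulN1r; apply: genIM. Qed.

Lemma genIB (T : comNzRingType) G p q : genI T G p -> genI T G q -> genI T G (p - q).
Proof. by move=> Hp Hq; apply: genID => //; apply: genIN. Qed.

Lemma genIg (T : comNzRingType) (G : T -> Prop) p : G p -> genI T G p.
Proof.
move=> Hp; exists [:: (1, p)]; split; first by move=> q; rewrite inE => /eqP ->.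
by rewrite big_seq1 mul1r.
Qed.

Lemma genI_sum (T : comNzRingType) G (I : finType) (P : pred I) (F : I -> T) :
  (forall i, P i -> genI T G (F i)) -> genI T G (\sum_(i | P i) F i).
Proof.
move=> H; elim/big_rec: _ => [|i x Pi Hx]; first exact: genI0.
by apply: genID => //; apply: H.
Qed.

Lemma genI_ideal (T : comNzRingType) (G : T -> Prop) (P : T -> Prop) t :
  (forall g, G g -> P (g * t)) -> (P 0) -> (forall x y, P x -> P y -> P (x + y)) ->
  (forall r x, P x -> P (r * x)) ->
  forall l, genI T G l -> P (l * t).
Proof.
move=> Hg H0 HD HM l [s [Hs ->]]; rewrite mulr_suml.
elim: s Hs => [|q s IH] Hs; first by rewrite big_nil.
rewrite big_cons; apply: HD; last by apply: IH => x xs; apply: Hs; rewrite inE xs orbT.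
by rewrite -mulrA; apply: HM; apply: Hg; apply: Hs; rewrite inE eqxx.
Qed.

Lemma swapcE n a (s r : tup n a) l j : swapc n a s r l j = if j == l then r j else s j.
Proof. by rewrite /swapc ffunE. Qed.

Lemma suppE n a (s : tup n a) j : (j \in supp n a s) = (s j != None).
Proof. by rewrite /supp inE. Qed.

Lemma swapc_swapc n a (s r t : tup n a) l : swapc n a (swapc n a s r l) t l = swapc n a s t l.
Proof. by apply/ffunP => j; rewrite !swapcE; case: eqP. Qed.

Lemma swapc_id n a (s r : tup n a) l : r l = s l -> swapc n a s r l = s.
Proof. by move=> E; apply/ffunP => j; rewrite !swapcE; case: eqP => // ->. Qed.

Lemma swapc_at n a (s r : tup n a) l : swapc n a s r l l = r l.
Proof. by rewrite /swapc ffunE eqxx. Qed.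

Lemma supp_swapc n a (s r : tup n a) l : s l != None -> r l != None ->
  supp n a (swapc n a s r l) = supp n a s.
Proof.
move=> Hs Hr; apply/setP => j; rewrite !suppE swapcE.
by case: (eqVneq j l) => [->|]; rewrite ?eqxx ?Hs ?Hr.
Qed.

Lemma swapc_eqr n a (s r r' : tup n a) l : r l = r' l -> swapc n a s r l = swapc n a s r' l.
Proof. by move=> E; apply/ffunP => j; rewrite !swapcE; case: (eqVneq j l) => [->|]. Qed.

Definition restr n a (J : {set 'I_n}) (c : cell n a) : tup n a :=
  [ffun j => if j \in J then Some (c j) else None].

Definition agree n a (r t : tup n a) : bool :=
  [forall j, (r j != None) ==> (t j == r j)].

Lemma matchesP n a (s : tup n a) (c : cell n a) :
  reflect (forall j i, s j = Some i -> c j = i) (matches n a s c).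
Proof.
apply: (iffP forallP) => [H j i E|H j].
  by move: (H j); rewrite E => /eqP.
by case E: (s j) => [i|] //; rewrite (H j i E).
Qed.

Lemma agreeP n a (r t : tup n a) :
  reflect (forall j, r j != None -> t j = r j) (agree n a r t).
Proof.
apply: (iffP forallP) => [H j Hj|H j].
  by move: (H j); rewrite Hj => /eqP.
by apply/implyP => Hj; rewrite (H j Hj).
Qed.

Lemma xm_ext (K : fieldType) n a (r : tup n a) (J : {set 'I_n}) : supp n a r \subset J ->
  xm K n a r = \sum_(t | (supp n a t == J) && agree n a r t) xm K n a t.
Proof.
move=> HrJ; rewrite /xm.
rewrite (partition_big (restr n a J) (fun t => (supp n a t == J) && agree n a r t)).
  apply: eq_bigr => t /andP[/eqP Ht /agreeP Ha]; apply: eq_bigl => c.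
  apply/idP/idP.
    move=> /andP[_ /eqP <-]; apply/matchesP => j i.
    by rewrite /restr ffunE; case: ifP => // _ [].
  move=> /matchesP Hm; apply/andP; split.
    apply/matchesP => j i Ej.
    have Hj : r j != None by rewrite Ej.
    by apply: Hm; rewrite Ha.
  apply/eqP/ffunP => j; rewrite /restr ffunE.
  case: ifP => HjJ.
    have : j \in supp n a t by rewrite Ht.
    by rewrite suppE; case E: (t j) => [i|] // _; rewrite (Hm j i E).
  have : j \notin supp n a t by rewrite Ht HjJ.
  by rewrite suppE negbK => /eqP ->.
move=> c /matchesP Hm; apply/andP; split.
  by apply/eqP/setP => j; rewrite suppE /restr ffunE; case: ifP.
apply/agreeP => j Hj.
have HjJ : j \in J by apply: (subsetP HrJ); rewrite suppE.
rewrite /restr ffunE HjJ.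
by move: Hj; case E: (r j) => [i|] // _; rewrite (Hm j i E).
Qed.

Lemma xm_ext_swap (K : fieldType) n a (p r : tup n a) (J : {set 'I_n}) l :
  supp n a p = J -> supp n a r \subset J -> r l != None ->
  \sum_(t | (supp n a t == J) && agree n a r t) xm K n a (swapc n a t p l)
  = xm K n a (swapc n a r p l).
Proof.
move=> Hp HrJ Hrl.
have HlJ : l \in J by apply: (subsetP HrJ); rewrite suppE.
have Hpl : p l != None by rewrite -suppE Hp.
have Hr' : supp n a (swapc n a r p l) \subset J by rewrite supp_swapc.
rewrite (@xm_ext K n a _ J Hr'); symmetry.
rewrite (reindex_onto (fun t => swapc n a t p l) (fun t => swapc n a t r l)); last first.
  move=> t /andP[_ /agreeP Ha]; rewrite swapc_swapc; apply: swapc_id.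
  by rewrite (Ha l) ?swapc_at.
symmetry; apply: eq_bigl => t; rewrite swapc_swapc.
apply/idP/idP.
  move=> /andP[/eqP Ht /agreeP Ha].
  have Htl : t l = r l by apply: Ha.
  have Htl' : t l != None by rewrite Htl.
  rewrite supp_swapc // Ht eqxx /=; apply/andP; split.
    apply/agreeP => j Hj; case: (eqVneq j l) => [->|Hjl]; first by rewrite !swapc_at.
    by move: Hj; rewrite !swapcE (negbTE Hjl); apply: Ha.
  by apply/eqP; apply: swapc_id.
move=> /andP[/andP[/eqP Ht /agreeP Ha] /eqP Ht2].
have Htl : t l = r l by rewrite -Ht2 swapc_at.
have Htl' : t l != None by rewrite Htl.
apply/andP; split.
  by rewrite -(@supp_swapc n a t p l Htl' Hpl) Ht.
apply/agreeP => j Hj.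
case: (eqVneq j l) => [->|Hjl]; first exact: Htl.
have := Ha j; rewrite !swapcE (negbTE Hjl); apply; exact: Hj.
Qed.

Lemma minor_in (K : fieldType) n a (D : {set {set 'I_n}}) (J : {set 'I_n}) s r l :
  J \in D -> supp n a s = J -> supp n a r = J -> l \in J ->
  IDelta K n a D (minor2 K n a s r l).
Proof.
move=> HJ Hs Hr Hl; apply: genIg; exists J; split => //.
by apply: genIg; exists s, r, l; split.
Qed.

Lemma lemA (K : fieldType) n a (D : {set {set 'I_n}}) (J : {set 'I_n}) (p r : tup n a) l :
  J \in D -> supp n a p = J -> supp n a r \subset J -> r l != None ->
  IDelta K n a D (xm K n a r * xm K n a p
                  - xm K n a (swapc n a r p l) * xm K n a (swapc n a p r l)).
Proof.
move=> HJ Hp HrJ Hrl.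
have HlJ : l \in J by apply: (subsetP HrJ); rewrite suppE.
rewrite {1}(@xm_ext K n a r J HrJ) -(@xm_ext_swap K n a p r J l Hp HrJ Hrl).
rewrite !mulr_suml -sumrB; apply: genI_sum => t /andP[/eqP Ht /agreeP Ha].
have -> : swapc n a p r l = swapc n a p t l.
  apply/ffunP => j; rewrite !swapcE; case: (eqVneq j l) => [->|] //.
  by rewrite Ha.
have -> : xm K n a t * xm K n a p - xm K n a (swapc n a t p l) * xm K n a (swapc n a p t l)
  = minor2 K n a t p l by rewrite /minor2 [xm K n a (swapc n a p t l) * _]mulrC.
exact: minor_in HJ Ht Hp HlJ.
Qed.

Lemma step (K : fieldType) n a (D : {set {set 'I_n}}) (J Ks : {set 'I_n}) (s p q : tup n a) l :
  J \in D -> Ks \in D -> supp n a s = J :&: Ks -> supp n a p = J -> supp n a q = Ks ->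
  l \in J :&: Ks ->
  IDelta K n a D (xm K n a s * (xm K n a p * xm K n a q)
     - xm K n a s * (xm K n a (swapc n a p q l) * xm K n a (swapc n a q p l))).
Proof.
move=> HJ HK Hs Hp Hq Hl.
have Hsl : s l != None by rewrite -suppE Hs.
have Hpl : p l != None by rewrite -suppE Hp; move: Hl; rewrite inE => /andP[].
have Hql : q l != None by rewrite -suppE Hq; move: Hl; rewrite inE => /andP[].
have S1 : supp n a s \subset J by rewrite Hs subsetIl.
have S2 : supp n a (swapc n a s p l) \subset Ks by rewrite supp_swapc // Hs subsetIr.
have S3 : supp n a (swapc n a p s l) = J by rewrite supp_swapc.
have S4 : supp n a (swapc n a s q l) \subset J by rewrite supp_swapc // Hs subsetIl.
have N2 : swapc n a s p l l != None by rewrite swapc_at.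
have N3 : swapc n a s q l l != None by rewrite swapc_at.
have E1 := @lemA K n a D J p s l HJ Hp S1 Hsl.
have E2 := @lemA K n a D Ks q (swapc n a s p l) l HK Hq S2 N2.
have E3 := @lemA K n a D J (swapc n a p s l) (swapc n a s q l) l HJ S3 S4 N3.
rewrite !swapc_swapc in E2 E3.
rewrite (@swapc_id n a s (swapc n a p s l)) in E3; last by rewrite !swapc_at.
rewrite (@swapc_eqr n a q (swapc n a s p l) p) in E2; last by rewrite !swapc_at.
rewrite (@swapc_eqr n a p (swapc n a s q l) q) in E3; last by rewrite !swapc_at.
move: E1 E2 E3.
set xs := xm K n a s; set xp := xm K n a p; set xq := xm K n a q.
set A := xm K n a (swapc n a s p l); set B := xm K n a (swapc n a p s l).
set C := xm K n a (swapc n a s q l); set Dq := xm K n a (swapc n a q p l).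
set P' := xm K n a (swapc n a p q l).
move=> E1 E2 E3.
have -> : xs * (xp * xq) - xs * (P' * Dq)
  = (xs * xp - A * B) * xq + (A * xq - C * Dq) * B + (C * B - xs * P') * Dq by ring.
by apply: genID; [apply: genID|]; apply: genIMr.
Qed.

Definition rk n a (j : 'I_n) (v : option 'I_(a j)) : 'I_#|ytype n a| :=
  enum_rank (Tagged (fun j => option 'I_(a j)) v : ytype n a).

Definition mon n a (s : tup n a) : 'X_{1..#|ytype n a|} :=
  (\sum_(j < n) U_(rk n a j (s j)))%MM.

Lemma tauM (K : fieldType) n a (p q : Spoly K n a) : tau K n a (p * q) = tau K n a p * tau K n a q.
Proof. by rewrite /tau rmorphM. Qed.
Lemma tauB (K : fieldType) n a (p q : Spoly K n a) : tau K n a (p - q) = tau K n a p - tau K n a q.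
Proof. by rewrite /tau rmorphB. Qed.
Lemma tauX (K : fieldType) n a s : tau K n a (XS K n a s) = xm K n a s.
Proof. by rewrite /tau /XS mmapX mmap1U enum_rankK. Qed.

Lemma etaM (K : fieldType) n a (p q : Spoly K n a) : Defs.eta K n a (p * q) = Defs.eta K n a p * Defs.eta K n a q.
Proof. by rewrite /Defs.eta rmorphM. Qed.
Lemma etaB (K : fieldType) n a (p q : Spoly K n a) : Defs.eta K n a (p - q) = Defs.eta K n a p - Defs.eta K n a q.
Proof. by rewrite /Defs.eta rmorphB. Qed.
Lemma etaX (K : fieldType) n a s : Defs.eta K n a (XS K n a s) = 'X_[mon n a s].
Proof.
rewrite /Defs.eta /XS mmapX mmap1U enum_rankK /mon.
rewrite (big_morph (fun m => 'X_[m] : Ypoly K n a) (@mpolyXD _ _) (@mpolyX0 _ _)).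
by [].
Qed.

Lemma mon_cnt n a (s : tup n a) j0 v : mon n a s (rk n a j0 v) = (s j0 == v) :> nat.
Proof.
rewrite /mon mnm_sumE (bigD1 j0) //= big1 ?addn0.
  by rewrite mnm1E (inj_eq enum_rank_inj) eq_Tagged.
move=> j Hj; rewrite mnm1E (inj_eq enum_rank_inj).
apply/eqP; rewrite eqb0; apply/negP => /eq_tag /= E.
by rewrite E eqxx in Hj.
Qed.

Lemma Q_pairs (K : fieldType) n a (al be ga de : tup n a) :
  inQ K n a (XS K n a al * XS K n a be - XS K n a ga * XS K n a de) ->
  forall j, (ga j = al j /\ de j = be j) \/ (ga j = be j /\ de j = al j).
Proof.
rewrite /inQ etaB !etaM !etaX -!mpolyXD => /eqP.
rewrite subr_eq0 => /eqP EX.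
have Em : (mon n a al + mon n a be = mon n a ga + mon n a de)%MM.
  have := congr1 (fun p => p@_(mon n a al + mon n a be)%MM) EX.
  rewrite !mcoeffX eqxx; case: eqP => // _ /eqP; by rewrite ?mulr1n ?mulr0n oner_eq0.
move=> j.
have C v : ((al j == v) + (be j == v) = (ga j == v) + (de j == v))%N.
  by have := congr1 (fun m : 'X_{1..#|ytype n a|} => m (rk n a j v)) Em; rewrite /= !mnmDE !mon_cnt.
have := C (ga j); rewrite eqxx.
case: (eqVneq (al j) (ga j)) => [Ea|Na] /= H.
  left; split => //; have := C (de j); rewrite Ea eqxx => /addnI.
  by case: eqP => // ->.
right; have Eb : be j = ga j by move: H; case: eqP.
split => //; have := C (al j); rewrite eqxx Eb eq_sym (negbTE Na) /=.
by case: eqP.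
Qed.

Lemma mainind (K : fieldType) n a (D : {set {set 'I_n}}) (J Ks : {set 'I_n}) (s ga de : tup n a) :
  J \in D -> Ks \in D -> supp n a s = J :&: Ks -> supp n a ga = J ->
  forall k (p q : tup n a), supp n a p = J -> supp n a q = Ks ->
  (forall j, (ga j = p j /\ de j = q j) \/ (ga j = q j /\ de j = p j)) ->
  (#|[set j | ga j != p j]| <= k)%N ->
  IDelta K n a D (xm K n a s * (xm K n a p * xm K n a q) - xm K n a s * (xm K n a ga * xm K n a de)).
Proof.
move=> HJ HK Hs Hga; elim=> [|k IH] p q Hp Hq Hpr Hk;
  case: (set_0Vmem [set j | ga j != p j]) => [E0|[j Hj]].
- have Ep : ga = p.
    apply/ffunP => j; apply/eqP; apply/negPn; apply/negP => H.
    have : j \in [set j | ga j != p j] by rewrite inE.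
    by rewrite E0 inE.
  have Eq : de = q.
    apply/ffunP => j; case: (Hpr j) => [[_ ->]//|[E1 E2]].
    by rewrite E2 -Ep E1.
  by rewrite Ep Eq subrr; apply: genI0.
- by move: Hk; rewrite leqn0 cards_eq0 => /eqP E; rewrite E inE in Hj.
- have Ep : ga = p.
    apply/ffunP => j; apply/eqP; apply/negPn; apply/negP => H.
    have : j \in [set j | ga j != p j] by rewrite inE.
    by rewrite E0 inE.
  have Eq : de = q.
    apply/ffunP => j; case: (Hpr j) => [[_ ->]//|[E1 E2]].
    by rewrite E2 -Ep E1.
  by rewrite Ep Eq subrr; apply: genI0.
move: Hj; rewrite inE => Hj.
have [E1 E2] : ga j = q j /\ de j = p j.
  by case: (Hpr j) => [[E _]|//]; rewrite E eqxx in Hj.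
have Hpj : p j != None.
  apply/negP => /eqP Hpn.
  have : j \notin supp n a p by rewrite suppE Hpn.
  by rewrite Hp -Hga suppE negbK => /eqP H; rewrite H Hpn eqxx in Hj.
have HjJ : j \in J by rewrite -Hp suppE.
have Hqj : q j != None by rewrite -E1 -suppE Hga.
have HjK : j \in Ks by rewrite -Hq suppE.
have Hl : j \in J :&: Ks by rewrite inE HjJ HjK.
have S := @step K n a D J Ks s p q j HJ HK Hs Hp Hq Hl.
have IH' := IH (swapc n a p q j) (swapc n a q p j).
rewrite supp_swapc // supp_swapc // in IH'.
have := IH' Hp Hq.
have Hpr' : forall j0, (ga j0 = swapc n a p q j j0 /\ de j0 = swapc n a q p j j0) \/
      (ga j0 = swapc n a q p j j0 /\ de j0 = swapc n a p q j j0).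
  move=> j0; case: (eqVneq j0 j) => [->|Hj0].
    by left; rewrite !swapc_at.
  by rewrite !swapcE (negbTE Hj0); apply: Hpr.
move=> /(_ Hpr') H.
have Hk' : (#|[set j0 | ga j0 != swapc n a p q j j0]| <= k)%N.
  rewrite -ltnS; apply: leq_trans Hk; apply: proper_card; apply/properP; split.
    apply/subsetP => j0; rewrite !inE; case: (eqVneq j0 j) => [->|Hj0].
      by rewrite swapc_at E1 eqxx.
    by rewrite swapcE (negbTE Hj0).
  by exists j; [rewrite inE | rewrite inE swapc_at E1 eqxx].
have := H Hk' => H2.
have -> : xm K n a s * (xm K n a p * xm K n a q) - xm K n a s * (xm K n a ga * xm K n a de)
  = (xm K n a s * (xm K n a p * xm K n a q) - xm K n a s * (xm K n a (swapc n a p q j) * xm K n a (swapc n a q p j)))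
  + (xm K n a s * (xm K n a (swapc n a p q j) * xm K n a (swapc n a q p j)) - xm K n a s * (xm K n a ga * xm K n a de)).
  by rewrite addrA subrK.
exact: genID.
Qed.

Theorem lemma4p2 (K : fieldType) (n : nat) (a : 'I_n -> nat)
  (a_pos : forall j, (0 < a j)%N)
  (D : {set {set 'I_n}}) (HD : simplicial n D)
  (al be ga de : tup n a) (J : {set 'I_n})
  (Hal : supp n a al \in D) (Hbe : supp n a be \in D)
  (Hga : supp n a ga \in D) (Hde : supp n a de \in D)
  (HalJ : supp n a al = J) (HgaJ : supp n a ga = J)
  (HQ : inQ K n a (XS K n a al * XS K n a be - XS K n a ga * XS K n a de)) :
  forall l : Rpoly K n a, Lmarg K n a (J :&: supp n a be) l ->
    IDelta K n a D (l * tau K n a (XS K n a al * XS K n a be - XS K n a ga * XS K n a de)).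
Proof.
move=> l Hl.
rewrite tauB !tauM !tauX.
have Hpr := @Q_pairs K n a al be ga de HQ.
have HJ : J \in D by rewrite -HalJ.
apply: (@genI_ideal _ _ (IDelta K n a D) _ _ _ _ _ l Hl).
- move=> g [s [Hs ->]]; rewrite mulrBr.
  exact: (@mainind K n a D J (supp n a be) s ga de HJ Hbe Hs HgaJ
            #|[set j | ga j != al j]| al be HalJ erefl Hpr (leqnn _)).
- exact: genI0.
- by move=> x y; apply: genID.
- by move=> r x; apply: genIM.
Qed.
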